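(* Let $m\subseteq\{a\}^*\times\{a,b,\#\}^*$ be the relation $\{(a^n,w\#w)\mid n\ge0,\ w\in\{a,b\}^*,\ |w|=n\}$. Then $m$ is not realized by any (nondeterministic) two-way generalized sequential machine.
   Context: A 2gsm is $M=(Q,\Sigma_1,\Sigma_2,\delta,q_{in},q_f)$ with finite state set $Q$ and finite instruction set $\delta$ of instructions $(p,\sigma,q_1,\alpha_1,\epsilon_1,q_0,\alpha_0,\epsilon_0)$, $p\in Q\setminus\{q_f\}$, $\sigma\in\Sigma_1\cup\{\vdash,\dashv\}$, $q_i\in Q$, $\alpha_i\in\Sigma_2^*$, $\epsilon_i\in\{-1,0,+1\}$. On input $w$ the read-only tape contains $\vdash w\dashv$ at positions $0,\dots,|w|+1$; the machine starts in $q_{in}$ at position $0$. In state $p$ it may execute any instruction starting with $p$: if the scanned symbol is $\sigma$ it enters $q_1$, appends $\alpha_1$ to the one-way output tape and moves by $\epsilon_1$, otherwise it does so with $(q_0,\alpha_0,\epsilon_0)$; the head may not leave the tape. $M$ realizes the relation of all $(w,z)$ for which some computation reaches $q_f$ having written $z$. *)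

(* Defs.v *)
From Stdlib Require Import List.
From HB Require Import structures.
From mathcomp Require Import all_boot.
Set Implicit Arguments. Unset Strict Implicit. Unset Printing Implicit Defensive.

Inductive tsym (S : Type) := LEnd | REnd | Sym of S.
Arguments LEnd {S}. Arguments REnd {S}.

Definition tsym_eq {S : eqType} (x y : tsym S) : bool :=
  match x, y with
  | LEnd, LEnd => true | REnd, REnd => true
  | Sym a, Sym b => a == b | _, _ => false end.

Inductive move := MLeft | MStay | MRight.

Record instr (Q S1 S2 : Type) := Instr {
  i_p : Q; i_sigma : tsym S1;
  i_q1 : Q; i_alpha1 : seq S2; i_eps1 : move;
  i_q0 : Q; i_alpha0 : seq S2; i_eps0 : move }.

Record gsm2 (Q : finType) (S1 S2 : Type) := Gsm2 {
  delta : seq (instr Q S1 S2);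
  q_in : Q;
  q_f : Q }.

Definition gsm2_wf (Q : finType) S1 S2 (M : gsm2 Q S1 S2) : Prop :=
  forall d, In d (delta M) -> i_p d != q_f M.

(* Contents of the tape |- w -| at position i (0 .. |w|+1). *)
Definition tape {S : Type} (w : seq S) (i : nat) : tsym S :=
  if i == 0 then LEnd
  else if i <= size w then
    (match drop i.-1 w with x :: _ => Sym x | [::] => REnd end)
  else REnd.

Definition do_move (n i : nat) (e : move) : option nat :=
  match e with
  | MLeft => if i == 0 then None else Some i.-1
  | MStay => Some i
  | MRight => if i < n.+1 then Some i.+1 else None
  end.

(* Configurations: (state, head position, output written so far). *)
Section Semantics.
Variables (Q : finType) (S1 : eqType) (S2 : Type) (M : gsm2 Q S1 S2).

Definition step (w : seq S1) (c c' : Q * nat * seq S2) : Prop :=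
  let: (p, i, z) := c in
  exists2 d, In d (delta M) &
    i_p d = p /\
    let: (q, alpha, e) :=
      if tsym_eq (tape w i) (i_sigma d)
      then (i_q1 d, i_alpha1 d, i_eps1 d)
      else (i_q0 d, i_alpha0 d, i_eps0 d) in
    exists2 i', do_move (size w) i e = Some i' & c' = (q, i', z ++ alpha).

Inductive reach (w : seq S1) : Q * nat * seq S2 -> Q * nat * seq S2 -> Prop :=
  | reach_refl c : reach w c c
  | reach_step c c' c'' : step w c c' -> reach w c' c'' -> reach w c c''.

Definition gsm2_rel (w : seq S1) (z : seq S2) : Prop :=
  exists i, reach w (q_in M, 0, [::]) (q_f M, i, z).

End Semantics.

Definition realizes (Q : finType) (S1 : eqType) S2 (M : gsm2 Q S1 S2)
  (R : seq S1 -> seq S2 -> Prop) : Prop :=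
  forall w z, gsm2_rel M w z <-> R w z.

Inductive in_a := ia.
Definition in_a_eqb (x y : in_a) : bool := true.
Lemma in_a_eqP : Equality.axiom in_a_eqb.
Proof. by case; case; constructor. Qed.
HB.instance Definition _ := hasDecEq.Build in_a in_a_eqP.

Inductive out_abh := oa | ob | ohash.
Inductive letter_ab := la | lb.
Definition emb (x : letter_ab) : out_abh := if x is la then oa else ob.

Definition m_rel (u : seq in_a) (z : seq out_abh) : Prop :=
  exists w : seq letter_ab, size w = size u /\
    z = map emb w ++ ohash :: map emb w.

(* Main.v *)
Require Import Defs.
From HB Require Import structures.
From mathcomp Require Import all_boot.
From mathcomp Require Import zify.
From Stdlib Require Import ClassicalEpsilon.

Set Implicit Arguments. Unset Strict Implicit. Unset Printing Implicit Defensive.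

Definition oeqb (x y : out_abh) : bool :=
  match x, y with oa, oa | ob, ob | ohash, ohash => true | _, _ => false end.
Lemma oeqP : Equality.axiom oeqb.
Proof. by do 2 case; constructor. Qed.
HB.instance Definition _ := @hasDecEq.Build out_abh oeqb oeqP.

Lemma split_hash (a : seq out_abh) : ohash \in a ->
  exists x y, a = x ++ ohash :: y /\ ohash \notin x.
Proof.
elim: a => [|h a IH] //=; rewrite in_cons; case: h => /=.
- move=> /IH [x [y [-> Hx]]]; by exists (oa :: x), y.
- move=> /IH [x [y [-> Hx]]]; by exists (ob :: x), y.
- move=> _; by exists [::], a.
Qed.

Lemma hash_uniq (x x' y y' : seq out_abh) : ohash \notin x -> ohash \notin x' ->
  x ++ ohash :: y = x' ++ ohash :: y' -> x = x' /\ y = y'.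
Proof.
elim: x x' => [|h x IH] [|h' x'] //=.
- by move=> _ _ [->].
- by rewrite in_cons => _ /norP [/eqP Hh _] [E]; rewrite E in Hh.
- by rewrite in_cons => /norP [/eqP Hh _] _ [E]; rewrite E in Hh.
- rewrite !in_cons => /norP [_ Hx] /norP [_ Hx'] [-> E].
  by have [-> ->] := IH _ Hx Hx' E.
Qed.

Lemma do_move_bound n i e j : i <= n.+1 -> do_move n i e = Some j -> j <= n.+1.
Proof.
case: e => /=.
- by case: ifP => // _ Hi [<-]; apply: leq_trans (leq_pred _) Hi.
- by move=> Hi [<-].
- by case: ifP => // H _ [<-].
Qed.

Section Main.
Variables (Q : finType) (M : gsm2 Q in_a out_abh).

Definition alphas : seq (seq out_abh) :=
  flatten [seq [:: i_alpha1 d; i_alpha0 d] | d <- delta M].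
Definition Ys : seq (seq out_abh) :=
  flatten [seq [seq drop k a | k <- iota 0 (size a).+1] | a <- alphas].

Lemma in_alphas d : List.In d (delta M) -> i_alpha1 d \in alphas /\ i_alpha0 d \in alphas.
Proof.
rewrite /alphas; elim: (delta M) => [|d' l IH] //= [->|H].
- by rewrite !in_cons !eqxx /= ?orbT.
- by have [H1 H2] := IH H; rewrite !in_cons H1 H2 !orbT.
Qed.

Lemma in_Ys a k : a \in alphas -> drop k a \in Ys.
Proof.
move=> Ha; apply/flattenP.
exists [seq drop k a | k <- iota 0 (size a).+1]; first by apply/mapP; exists a.
apply/mapP; exists (minn k (size a)).
- by rewrite mem_iota /= add0n ltnS geq_minr.
- rewrite /minn; case: ifP => // /negbT; rewrite -leqNgt => H.
  by rewrite !drop_oversize.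
Qed.

Lemma step_inv (w : seq in_a) p i z c' : step M w (p, i, z) c' ->
  exists q j a, [/\ c' = (q, j, z ++ a), a \in alphas,
    forall z', step M w (p, i, z') (q, j, z' ++ a)
    & i <= (size w).+1 -> j <= (size w).+1].
Proof.
case=> d Hd [Hp]; have [HA1 HA0] := in_alphas Hd.
case E: (tsym_eq _ _) => -[j Hmv ->].
- exists (i_q1 d), j, (i_alpha1 d); split => //.
  + by move=> z'; exists d => //; split => //; rewrite E; exists j.
  + by move=> Hi; apply: do_move_bound Hmv.
- exists (i_q0 d), j, (i_alpha0 d); split => //.
  + by move=> z'; exists d => //; split => //; rewrite E; exists j.
  + by move=> Hi; apply: do_move_bound Hmv.
Qed.

Lemma reach_trans w c1 c2 c3 : reach M w c1 c2 -> reach M w c2 c3 -> reach M w c1 c3.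
Proof.
elim=> [//|a b c Hab _ IH] H; apply: reach_step Hab (IH H).
Qed.

Lemma reach_ext w c c'' : reach M w c c'' -> forall p i z q j z2,
  c = (p, i, z) -> c'' = (q, j, z2) ->
  exists s, z2 = z ++ s /\ forall z', reach M w (p, i, z') (q, j, z' ++ s).
Proof.
elim=> [c0|c0 c' c2 Hst _ IH] p i z q j z2 E1 E2.
- subst; case: E2 => -> -> ->; exists [::]; split; first by rewrite cats0.
  by move=> z'; rewrite cats0; apply: reach_refl.
- subst; have [q1 [j1 [a [E Ha Hs _]]]] := step_inv Hst; subst.
  have [s [-> Hr]] := IH _ _ _ _ _ _ erefl erefl.
  exists (a ++ s); split; first by rewrite catA.
  by move=> z'; apply: reach_step (Hs z') _; rewrite catA; apply: Hr.
Qed.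

Lemma reach_bound w c c'' : reach M w c c'' -> c.1.2 <= (size w).+1 -> c''.1.2 <= (size w).+1.
Proof.
elim=> [//|[[p i] z] c' c2 Hst _ IH] /= Hi; apply: IH.
have [q1 [j1 [a [E Ha Hs Hb]]]] := step_inv Hst; subst => /=; exact: Hb.
Qed.

Lemma cross w c c'' : reach M w c c'' -> forall p i z, c = (p, i, z) -> ohash \notin z ->
  forall W V q j, c'' = (q, j, W ++ ohash :: V) -> ohash \notin W ->
  exists p2 i2 y, [/\ y \in Ys, reach M w c (p2, i2, W ++ ohash :: y)
                    & reach M w (p2, i2, W ++ ohash :: y) c''].
Proof.
elim=> [c0|c0 c' c2 Hst Hr IH] p i z E1 Hz W V q j E2 HW.
- subst; case: E2 => _ _ E; subst; by rewrite mem_cat in_cons eqxx orbT in Hz.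
- subst; have [q1 [j1 [a [E Ha Hs _]]]] := step_inv Hst; subst.
  case: (boolP (ohash \in a)) => Hha.
  + have [x [y [Ea Hx]]] := split_hash Hha.
    have [s [Es _]] := reach_ext Hr erefl erefl.
    move: Es; rewrite Ea -!catA cat_cons catA => Es.
    have Hzx : ohash \notin z ++ x by rewrite mem_cat negb_or Hz Hx.
    have [EW EV] := hash_uniq HW Hzx Es.
    exists q1, j1, y; split.
    * have -> : y = drop (size x).+1 a by rewrite Ea drop_cat ltnNge leqnSn /= subSnn /= drop0.
      exact: in_Ys.
    * apply: reach_step (Hst) _; rewrite Ea EW -catA; exact: reach_refl.
    * have -> : W ++ ohash :: y = z ++ a by rewrite Ea EW -catA.
      exact: Hr.
  + have Hza : ohash \notin z ++ a by rewrite mem_cat negb_or Hz Hha.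
    have [p2 [i2 [y [Hy H1 H2]]]] := IH _ _ _ erefl Hza _ _ _ _ erefl HW.
    exists p2, i2, y; split => //; exact: reach_step Hst H1.
Qed.

End Main.

Lemma pow_big c : exists n, c * (n + 2) < 2 ^ n.
Proof.
have H1 : forall k, 2 * (k + 4) + 2 < 2 ^ (k + 4).
  elim=> [//|k IH]; rewrite addSn expnS; lia.
exists (c + 4 + (c + 4)).
have Hc : c < 2 ^ (c + 4) := leq_ltn_trans (leq_addr 4 c) (ltn_expl _ (isT : 1 < 2)).
have := ltn_mul Hc (H1 c); rewrite -expnD; lia.
Qed.

Theorem lemma5p2 :
  forall (Q : finType) (M : gsm2 Q in_a out_abh),
    gsm2_wf M -> ~ realizes M m_rel.
Proof.
move=> Q M _ Hreal.
pose sY := size (Ys M).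
have [n Hn] := pow_big (#|Q| * sY).
pose w0 := nseq n ia.
pose lt (b : bool) := if b then lb else la.
pose W (t : n.-tuple bool) := map emb (map lt t).
have HW t : ohash \notin W t by rewrite /W -map_comp; apply/negP; case/mapP => x _; case: x.
have Hemb w : ohash \notin map emb w.
  by elim: w => [|x w IH] //=; rewrite in_cons negb_or IH andbT; case: x.
pose R (t : n.-tuple bool) (k : Q * 'I_(n + 2) * 'I_sY) :=
  let: (p, i, l) := k in
  reach M w0 (q_in M, 0, [::]) (p, val i, W t ++ ohash :: nth [::] (Ys M) l) /\
  exists j, reach M w0 (p, val i, W t ++ ohash :: nth [::] (Ys M) l)
                       (q_f M, j, W t ++ ohash :: W t).
have ex t : exists k, R t k.
  have : m_rel w0 (W t ++ ohash :: W t).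
    by exists (map lt t); rewrite size_map size_tuple size_nseq.
  move/Hreal => [j Hr].
  have [p2 [i2 [y [Hy H1 H2]]]] := cross Hr erefl isT erefl (HW t).
  have Hb := reach_bound H1 (erefl _ : 0 <= (size w0).+1).
  rewrite /= size_nseq in Hb.
  have Hi2 : i2 < n + 2 by rewrite addn2.
  have Hl : index y (Ys M) < sY by rewrite index_mem.
  exists (p2, Ordinal Hi2, Ordinal Hl); rewrite /R /= nth_index //.
  by split => //; exists j.
have ch t : {k | R t k} := constructive_indefinite_description _ (ex t).
pose f t := proj1_sig (ch t).
have finj : injective f.
  move=> t t' Ef.
  have Rt := proj2_sig (ch t); have Rt' := proj2_sig (ch t').
  rewrite -/(f t) in Rt; rewrite -/(f t') -Ef in Rt'.
  move: Rt Rt'; case: (f t) => [[p i] l] /= [H1 _] [_ [j H2]].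
  set y := nth [::] (Ys M) l in H1 H2.
  have [s [Es Hs]] := reach_ext H2 erefl erefl.
  have Hrel : gsm2_rel M w0 ((W t ++ ohash :: y) ++ s).
    by exists j; apply: reach_trans H1 (Hs _).
  move/Hreal: Hrel => [w'' [_ E]].
  rewrite -catA cat_cons in E.
  have [E1 E2] := hash_uniq (HW t) (Hemb w'') E.
  rewrite -catA cat_cons in Es.
  have [_ E3] := hash_uniq (HW t') (HW t') Es.
  have EW : W t = W t' by rewrite E1 -E2 -E3.
  apply: val_inj; move: EW; rewrite /W => /inj_map H; apply: (inj_map _ (H _)).
  - by do 2 case.
  - by do 2 case.
have := @leq_card _ _ f finj.
rewrite card_tuple card_bool !card_prod !card_ord.
rewrite -/sY; lia.
Qed.
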